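(* Let $S\subset\mathbb{R}^n$ be a real algebraic variety given as the common zero set of $m$ real polynomials $F_1,\dots,F_m$ in unknowns $x_1,\dots,x_n$, such that every point $(x_1,\dots,x_n)\in S$ satisfies $0<x_i$ for $i=1,\dots,n$ and $\sum_{i=1}^n x_i<1$. Suppose the highest power of $x_i$ occurring in $F_j$ is $x_i^{d_{ij}}$, and set $$D'=\sum_{i=1}^n\max_{1\le j\le m}d_{ij}.$$ Then there is a game with $D'+m$ players, each of whom has $2$ pure strategies, whose set of totally mixed Nash equilibria is stably isomorphic to $S$.
   Context: A real algebraic variety is the set of common real zeros in $\mathbb{R}^n$ of finitely many real polynomials. Two semialgebraic sets are semialgebraically isomorphic if there is a homeomorphism between them whose graph is semialgebraic; they are stably isomorphic if they are equivalent under the equivalence relation generated by semialgebraic isomorphisms and the canonical projections $W\times\mathbb{R}^k\to W$. A finite normal form game consists of players $I=\{1,\dots,N\}$, finite pure strategy sets $S_i=\{s_{i0},\dots,s_{id_i}\}$, and payoffs $u_i:\prod_i S_i\to\mathbb{R}$. A mixed strategy of player $i$ is a probability vector $\sigma_i$ on $S_i$; expected payoffs are multilinear: $u_i(\sigma)=\sum_{s}u_i(s)\prod_k\sigma_k(s_k)$, and $u_i(s_{ij},\sigma_{-i})$ denotes player $i$'s expected payoff when $i$ plays $s_{ij}$ and the others play according to $\sigma$. A profile $\sigma$ is a totally mixed Nash equilibrium if $0<\sigma_i(s_{ij})<1$ for all $i,j$ and $u_i(s_{ij},\sigma_{-i})=u_i(s_{i0},\sigma_{-i})$ for all $i$ and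 $j=1,\dots,d_i$. When every player has two pure strategies, the set of totally mixed Nash equilibria is regarded as a subset of $\mathbb{R}^N$ via the coordinates $p_i=\sigma_i(s_{i1})$. *)

(* Defs.v *)
From HB Require Import structures.
From mathcomp Require Import all_boot all_order all_algebra.
From mathcomp Require Import all_classical all_reals all_analysis.
From mathcomp Require mpoly.

Set Implicit Arguments.
Unset Strict Implicit.
Unset Printing Implicit Defensive.

Import Order.TTheory GRing.Theory Num.Theory.
Import numFieldNormedType.Exports.
Local Open Scope classical_set_scope.
Local Open Scope ring_scope.

Definition coords (R : realType) (n : nat) (x : 'rV[R]_n) : 'I_n -> R :=
  fun i => x ord0 i.

Definition peval (R : realType) (n : nat) (p : mpoly.mpoly n R)
  (x : 'rV[R]_n) : R := mpoly.meval (coords x) p.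

(* Highest power of x_i occurring in p (0 for the zero polynomial). *)
Definition deg_in (R : realType) (n : nat) (p : mpoly.mpoly n R) (i : 'I_n)
  : nat := (\max_(mm <- mpoly.msupp p) mpoly.fun_of_multinom mm i)%N.

Inductive semialgebraic (R : realType) (n : nat) : set 'rV[R]_n -> Prop :=
| sa_zero (p : mpoly.mpoly n R) : semialgebraic [set x | peval p x = 0]
| sa_pos (p : mpoly.mpoly n R) : semialgebraic [set x | 0 < peval p x]
| sa_union (A B : set 'rV[R]_n) :
    semialgebraic A -> semialgebraic B -> semialgebraic (A `|` B)
| sa_compl (A : set 'rV[R]_n) : semialgebraic A -> semialgebraic (~` A).

Definition graph_on (R : realType) (a b : nat) (A : set 'rV[R]_a)
  (f : 'rV[R]_a -> 'rV[R]_b) : set 'rV[R]_(a + b) :=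
  [set z | A (lsubmx z) /\ f (lsubmx z) = rsubmx z].

Definition sa_isomorphic (R : realType) (a b : nat)
  (A : set 'rV[R]_a) (B : set 'rV[R]_b) : Prop :=
  exists (f : 'rV[R]_a -> 'rV[R]_b) (g : 'rV[R]_b -> 'rV[R]_a),
    (forall x, A x -> B (f x)) /\
    (forall y, B y -> A (g y)) /\
    (forall x, A x -> g (f x) = x) /\
    (forall y, B y -> f (g y) = y) /\
    {within A, continuous f} /\
    {within B, continuous g} /\
    semialgebraic (graph_on A f).

Definition cylinder (R : realType) (a k : nat) (W : set 'rV[R]_a)
  : set 'rV[R]_(a + k) := [set z | W (lsubmx z)].

Inductive stably_isomorphic (R : realType) :
  forall a : nat, set 'rV[R]_a -> forall b : nat, set 'rV[R]_b -> Prop :=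
| si_iso a b (A : set 'rV[R]_a) (B : set 'rV[R]_b) :
    sa_isomorphic A B -> stably_isomorphic A B
| si_proj a k (W : set 'rV[R]_a) :
    semialgebraic W -> stably_isomorphic (@cylinder R a k W) W
| si_sym a b (A : set 'rV[R]_a) (B : set 'rV[R]_b) :
    stably_isomorphic A B -> stably_isomorphic B A
| si_trans a b c (A : set 'rV[R]_a) (B : set 'rV[R]_b) (C : set 'rV[R]_c) :
    stably_isomorphic A B -> stably_isomorphic B C -> stably_isomorphic A C.

(* Games with N players, each with two pure strategies s_i0 = false,
   s_i1 = true. A game is its payoff function u i s. *)
Definition game2 (R : realType) (N : nat) :=
  'I_N -> {ffun 'I_N -> bool} -> R.

(* u_i(s_ij, sigma_{-i}) where sigma_k(s_k1) = p_k, sigma_k(s_k0) = 1 - p_k. *)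
Definition dev_payoff (R : realType) (N : nat) (u : game2 R N) (i : 'I_N)
  (b : bool) (p : 'rV[R]_N) : R :=
  \sum_(s : {ffun 'I_N -> bool} | s i == b)
     u i s * \prod_(k < N | k != i)
               (if s k then coords p k else 1 - coords p k).

(* Totally mixed Nash equilibria, as a subset of R^N via p_i = sigma_i(s_i1). *)
Definition totally_mixed_NE (R : realType) (N : nat) (u : game2 R N)
  : set 'rV[R]_N :=
  [set p | forall i : 'I_N,
     (0 < coords p i < 1) /\ dev_payoff u i true p = dev_payoff u i false p].

Definition zero_set (R : realType) (n m : nat) (F : 'I_m -> mpoly.mpoly n R)
  : set 'rV[R]_n := [set x | forall j, peval (F j) x = 0].

(* Main.v *)
Require Import Defs.
From HB Require Import structures.
From mathcomp Require Import all_boot all_order all_algebra.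
From mathcomp Require Import mpoly.
From mathcomp Require Import all_classical all_reals all_analysis.
From mathcomp Require Import ring lra zify.
Import Order.TTheory GRing.Theory Num.Theory.
Import numFieldNormedType.Exports.
Local Open Scope classical_set_scope.
Local Open Scope ring_scope.
Set Implicit Arguments.
Unset Strict Implicit.
Unset Printing Implicit Defensive.

Section Poly.
Variable R : realType.

Definition is_poly (a : nat) (f : 'rV[R]_a -> R) :=
  exists p : mpoly.mpoly a R, forall x, f x = peval p x.

Lemma is_polyC a (c : R) : is_poly (fun _ : 'rV[R]_a => c).
Proof. exists (mpolyC a c) => x; by rewrite /peval mevalC. Qed.

Lemma is_polyX a (i : 'I_a) : is_poly (fun x : 'rV[R]_a => x ord0 i).
Proof. exists ((mpolyX R (mnm1 i))) => x; by rewrite /peval mevalXU. Qed.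

Lemma is_polyD a (f g : 'rV[R]_a -> R) : is_poly f -> is_poly g -> is_poly (fun x => f x + g x).
Proof. move=> [p hp] [q hq]; exists (p + q) => x; by rewrite /peval mevalD -!/(peval _ _) hp hq. Qed.

Lemma is_polyM a (f g : 'rV[R]_a -> R) : is_poly f -> is_poly g -> is_poly (fun x => f x * g x).
Proof. move=> [p hp] [q hq]; exists (p * q) => x; by rewrite /peval mevalM -!/(peval _ _) hp hq. Qed.

Lemma is_polyN a (f : 'rV[R]_a -> R) : is_poly f -> is_poly (fun x => - f x).
Proof. move=> [p hp]; exists (- p) => x; by rewrite /peval mevalN -!/(peval _ _) hp. Qed.

Lemma is_polyB a (f g : 'rV[R]_a -> R) : is_poly f -> is_poly g -> is_poly (fun x => f x - g x).
Proof. by move=> hf hg; apply: is_polyD => //; apply: is_polyN. Qed.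

Lemma is_poly_sum a (I : Type) (r : seq I) (P : pred I) (f : I -> 'rV[R]_a -> R) :
  (forall i, is_poly (f i)) -> is_poly (fun x => \sum_(i <- r | P i) f i x).
Proof.
move=> hf; elim: r => [|i r ih].
  by have [p hp] := is_polyC a 0; exists p => x; rewrite big_nil -hp.
case: (boolP (P i)) => Pi.
  have [p hp] := is_polyD (hf i) ih; exists p => x; by rewrite big_cons Pi -hp.
have [p hp] := ih; exists p => x; by rewrite big_cons (negbTE Pi) -hp.
Qed.

Lemma is_poly_prod a (I : Type) (r : seq I) (P : pred I) (f : I -> 'rV[R]_a -> R) :
  (forall i, is_poly (f i)) -> is_poly (fun x => \prod_(i <- r | P i) f i x).
Proof.
move=> hf; elim: r => [|i r ih].
  by have [p hp] := is_polyC a 1; exists p => x; rewrite big_nil -hp.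
case: (boolP (P i)) => Pi.
  have [p hp] := is_polyM (hf i) ih; exists p => x; by rewrite big_cons Pi -hp.
have [p hp] := ih; exists p => x; by rewrite big_cons (negbTE Pi) -hp.
Qed.

Lemma is_poly_ext a (f g : 'rV[R]_a -> R) : (forall x, f x = g x) -> is_poly f -> is_poly g.
Proof. move=> e [p hp]; exists p => x; by rewrite -e. Qed.

Lemma sa_ext a (A B : set 'rV[R]_a) : (forall x, A x <-> B x) -> semialgebraic A -> semialgebraic B.
Proof.
move=> e; have -> // : A = B.
by rewrite funeqE => x; rewrite propeqE; exact: e.
Qed.

Lemma sa_I a (A B : set 'rV[R]_a) : semialgebraic A -> semialgebraic B -> semialgebraic (A `&` B).
Proof.
move=> hA hB; apply: (sa_ext _ (sa_compl (sa_union (sa_compl hA) (sa_compl hB)))).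
move=> x /=; split.
  move=> h; split; apply: contrapT => nh; apply: h; by [left|right].
by move=> [h1 h2] [].
Qed.

Lemma sa_eq0 a (f : 'rV[R]_a -> R) : is_poly f -> semialgebraic [set x | f x = 0].
Proof. move=> [p hp]; apply: (sa_ext _ (sa_zero p)) => x /=; by rewrite hp. Qed.

Lemma sa_gt0 a (f : 'rV[R]_a -> R) : is_poly f -> semialgebraic [set x | 0 < f x].
Proof. move=> [p hp]; apply: (sa_ext _ (sa_pos p)) => x /=; by rewrite hp. Qed.

Lemma sa_setT a : semialgebraic [set: 'rV[R]_a].
Proof. apply: (sa_ext _ (sa_eq0 (is_polyC a 0))) => x /=; by split. Qed.

Lemma sa_set0 a : semialgebraic (@set0 'rV[R]_a).
Proof. apply: (sa_ext _ (sa_gt0 (is_polyC a 0))) => x /=; by rewrite ltxx. Qed.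

Lemma sa_forall a k (P : 'I_k -> set 'rV[R]_a) : (forall i, semialgebraic (P i)) ->
  semialgebraic [set x | forall i, P i x].
Proof.
move=> hP.
suff: forall j, semialgebraic [set x | forall i : 'I_k, (i < j)%N -> P i x].
  move=> /(_ k) h; apply: (sa_ext _ h) => x /=; split => H i; first exact: H.
  by move=> _; exact: H.
elim=> [|j ih].
  apply: (sa_ext _ (sa_setT a)) => x /=; by split.
case: (ltnP j k) => hj.
  apply: (sa_ext _ (sa_I ih (hP (Ordinal hj)))) => x /=; split.
    move=> [H1 H2] i; rewrite ltnS leq_eqVlt => /orP [/eqP e|]; last exact: H1.
    by have -> : i = Ordinal hj by apply: val_inj.
  by move=> H; split => [i hi|]; apply: H => //; apply: ltnW.
apply: (sa_ext _ ih) => x /=; split => H i hi; apply: H => //.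
  by apply: (leq_trans (ltn_ord i)).
by apply: ltn_trans hi _.
Qed.

Lemma row_continuous_at a b (f : 'rV[R]_a -> 'rV[R]_b) (x : 'rV[R]_a) :
  (forall j, {for x, continuous (fun y : 'rV[R]_a => f y ord0 j)}) -> {for x, continuous f}.
Proof.
move=> hc A /nbhs_ballP [e e0 eA].
have H : nbhs x [set y : 'rV[R]_a | forall j, ball (f x ord0 j) e (f y ord0 j)].
  refine (@filter_forall _ _ (fun j y => ball (f x ord0 j) e (f y ord0 j)) (nbhs x) _ _) => j.
  exact: (hc j (ball (f x ord0 j) e) (nbhsx_ballx _ _ e0)).
apply: (filterS _ H) => y Hy; apply: eA; split => // i j; by rewrite (ord1 i); apply: Hy.
Qed.

End Poly.

Section HH.
Variable R : realType.
Definition hh (t : R) : R := (2 * t - 1) / (t * (1 - t)).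
Definition hi (z : R) : R := 2 / (2 - z + Num.sqrt (z ^+ 2 + 4)).

Lemma sqrt_gt (z : R) : z < Num.sqrt (z ^+ 2 + 4) /\ - z < Num.sqrt (z ^+ 2 + 4).
Proof.
have h0 : 0 <= z ^+ 2 + 4 by rewrite addr_ge0 // sqr_ge0.
have hs := sqr_sqrtr h0; have hp := sqrtr_ge0 (z ^+ 2 + 4).
set s := Num.sqrt _ in hs hp *; split; nra.
Qed.

Lemma hi_den (z : R) : 2 < 2 - z + Num.sqrt (z ^+ 2 + 4).
Proof. have [h1 h2] := sqrt_gt z; lra. Qed.

Lemma hi_range (z : R) : 0 < hi z < 1.
Proof.
have hd := hi_den z; rewrite /hi; set d := (2 - z + _) in hd *.
have d0 : 0 < d by lra.
apply/andP; split; first by rewrite divr_gt0.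
by rewrite ltr_pdivrMr // mul1r.
Qed.

Lemma hh_char (t z : R) : 0 < t < 1 -> (hh t = z <-> z * (t * (1 - t)) = 2 * t - 1).
Proof.
move=> /andP [t0 t1]; have u0 : t * (1 - t) != 0 by apply/eqP; nra.
rewrite /hh; split => [<-|e]; first by rewrite mulfVK.
by rewrite -e mulfK.
Qed.

Lemma hh_hi (z : R) : hh (hi z) = z.
Proof.
apply/hh_char; first exact: hi_range.
have hd := hi_den z.
have h0 : 0 <= z ^+ 2 + 4 by rewrite addr_ge0 // sqr_ge0.
have hs := sqr_sqrtr h0.
have := hi_range z; rewrite /hi; set s := Num.sqrt _ in hd hs *.
set d := 2 - z + s in hd *.
set t := 2 / d => _.
have td : t * d = 2 by rewrite /t mulfVK //; apply/eqP; lra.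
have e1 : t * s = 2 - 2 * t + z * t by rewrite /d in td; nra.
have e2 : (t * s) ^+ 2 = (2 - 2 * t + z * t) ^+ 2 by rewrite e1.
rewrite exprMn hs in e2; nra.
Qed.

Lemma hi_hh (t : R) : 0 < t < 1 -> hi (hh t) = t.
Proof.
move=> /andP [t0 t1].
have u0 : 0 < t * (1 - t) by nra.
have u1 : 1 - 2 * (t * (1 - t)) >= 0 by nra.
have un : t * (1 - t) != 0 by rewrite gt_eqF.
have e : hh t ^+ 2 + 4 = ((1 - 2 * (t * (1 - t))) / (t * (1 - t))) ^+ 2.
  rewrite /hh; field; apply/andP; split; apply/eqP; nra.
rewrite /hi e sqrtr_sqr ger0_norm; last by rewrite divr_ge0 // ltW.
rewrite /hh.
have -> : 2 - (2 * t - 1) / (t * (1 - t)) + (1 - 2 * (t * (1 - t))) / (t * (1 - t)) = 2 / t.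
  field; apply/andP; split; apply/eqP; nra.
field; apply/eqP; lra.
Qed.

End HH.

Section HC.
Variable R : realType.
Lemma hi_cont : continuous (@hi R).
Proof.
move=> z; rewrite /hi.
have d0 : 2 - z + Num.sqrt (z ^+ 2 + 4) != 0 by apply/eqP; have := hi_den z; lra.
apply: (cvgM (f := fun _ : R => 2) (g := fun x : R => (2 - x + Num.sqrt (x ^+ 2 + 4))^-1)).
  exact: cvg_cst.
apply: cvgV => //.
apply: cvgD; first by apply: cvgB; [exact: cvg_cst | exact: cvg_id].
apply: (continuous_comp (f := fun x : R => x ^+ 2 + 4)); last exact: sqrt_continuous.
apply: cvgD; last exact: cvg_cst.
exact: exprn_continuous.
Qed.

Lemma hh_cont (t : R) : 0 < t < 1 -> {for t, continuous (@hh R)}.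
Proof.
move=> /andP [t0 t1]; rewrite /hh.
have d0 : t * (1 - t) != 0 by apply/eqP; nra.
apply: (cvgM (f := fun x : R => 2 * x - 1) (g := fun x : R => (x * (1 - x))^-1)).
  apply: cvgB; last exact: cvg_cst.
  apply: cvgM; [exact: cvg_cst | exact: cvg_id].
apply: cvgV => //.
apply: cvgM; first exact: cvg_id.
by apply: cvgB; [exact: cvg_cst | exact: cvg_id].
Qed.
End HC.

Section Game.
Variable R : realType.
Variable N : nat.

Definition wt (p : 'rV[R]_N) (k : 'I_N) (b : bool) : R :=
  if b then coords p k else 1 - coords p k.

Lemma dev_payoffE (u : game2 R N) i b p :
  dev_payoff u i b p = \sum_(s : {ffun 'I_N -> bool} | s i == b) u i s * \prod_(k < N | k != i) wt p k (s k).
Proof. by []. Qed.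

Lemma FL (i : 'I_N) (phi : 'I_N -> bool -> R) :
  \sum_(s : {ffun 'I_N -> bool} | s i == true) \prod_(k < N | k != i) phi k (s k)
  = \prod_(k < N | k != i) (phi k true + phi k false).
Proof.
pose psi k b : R := if k == i then (b == true)%:R else phi k b.
have H : \prod_(k < N) \sum_(b : bool) psi k b
   = \sum_(f : {ffun 'I_N -> bool}) \prod_(k < N) psi k (f k) by exact: bigA_distr_bigA.
rewrite (bigD1 i) //= big_bool /psi eqxx /= addr0 mul1r in H.
have H2 : \prod_(k < N | k != i) \sum_(b : bool) psi k b = \prod_(k < N | k != i) (phi k true + phi k false).
  by apply: eq_bigr => k /negbTE kn; rewrite big_bool /psi kn.
rewrite H2 in H; rewrite H big_mkcond /=; apply: eq_bigr => s _.
rewrite [RHS](bigD1 i) //= /psi eqxx; case: (s i) => /=; rewrite ?mul1r ?mul0r //.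
by apply: eq_bigr => k /negbTE ->.
Qed.

Definition mono (T : {set 'I_N}) (p : 'rV[R]_N) : R := \prod_(k < N | k \in T) coords p k.

Definition mgame (L : 'I_N -> seq (R * {set 'I_N})) : game2 R N :=
  fun i s => if s i then \sum_(l <- L i) l.1 * \prod_(k < N | k \in l.2) (s k)%:R else 0.

Lemma prod_off (i : 'I_N) (T : {set 'I_N}) (g : 'I_N -> R) : i \notin T ->
  \prod_(k < N | k \in T) g k = \prod_(k < N | k != i) (if k \in T then g k else 1).
Proof.
move=> Ti; rewrite big_mkcond [RHS]big_mkcond (bigD1 i) //= [RHS](bigD1 i) //=.
rewrite (negbTE Ti) eqxx /= !mul1r; apply: eq_bigr => k /negbTE kn; by rewrite kn.
Qed.

Lemma dev_mgame_true (L : 'I_N -> seq (R * {set 'I_N})) i p : (forall l, l \in L i -> i \notin l.2) ->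
  dev_payoff (mgame L) i true p = \sum_(l <- L i) l.1 * mono l.2 p.
Proof.
move=> hL; rewrite dev_payoffE.
under eq_bigr => s /eqP si do rewrite /mgame si big_distrl /=.
rewrite exchange_big /=; rewrite big_seq_cond [RHS]big_seq_cond; apply: eq_bigr => l /andP [lL _].
have Ti := hL l lL.
under eq_bigr => s _ do rewrite -mulrA (prod_off _ Ti) -big_split /=.
rewrite -big_distrr /= (FL i (fun k b => (if k \in l.2 then (b : bool)%:R else 1) * wt p k b)) /mono (prod_off _ Ti); congr (_ * _); apply: eq_bigr => k _.
rewrite /wt; case: (k \in l.2) => /=; ring.
Qed.

Lemma dev_mgame_false (L : 'I_N -> seq (R * {set 'I_N})) i p : dev_payoff (mgame L) i false p = 0.
Proof.
rewrite dev_payoffE big1 // => s /eqP si; by rewrite /mgame si mul0r.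
Qed.

End Game.

Section ML.
Variables (R : realType) (n m N k : nat) (F : 'I_m -> mpoly.mpoly n R) (u : game2 R N).
Variables (kind : 'I_N -> 'I_n + 'I_k) (r : 'I_n -> 'I_N) (fr : 'I_k -> 'I_N).
Hypothesis hr : forall i, kind (r i) = inl i.
Hypothesis hfr : forall l, kind (fr l) = inr l.
Hypothesis hfr' : forall t l, kind t = inr l -> t = fr l.
Hypothesis hS : forall x, zero_set F x -> forall i, 0 < coords x i < 1.

Definition Xof (p : 'rV[R]_N) : 'rV[R]_n := \row_i coords p (r i).

Hypothesis hC : forall p : 'rV[R]_N, (forall t, 0 < coords p t < 1) ->
  ((forall t, dev_payoff u t true p = dev_payoff u t false p) <->
   ((forall t i, kind t = inl i -> coords p t = coords p (r i)) /\ zero_set F (Xof p))).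

Definition fmap (p : 'rV[R]_N) : 'rV[R]_(n + k) :=
  row_mx (Xof p) (\row_l hh (coords p (fr l))).
Definition gmap (z : 'rV[R]_(n + k)) : 'rV[R]_N :=
  \row_t match kind t with inl i => lsubmx z ord0 i | inr l => hi (rsubmx z ord0 l) end.

Lemma NE_range p : totally_mixed_NE u p -> forall t, 0 < coords p t < 1.
Proof. by move=> H t; case: (H t). Qed.

Lemma NE_dev p : totally_mixed_NE u p -> forall t, dev_payoff u t true p = dev_payoff u t false p.
Proof. by move=> H t; case: (H t). Qed.

Lemma fmap_in p : totally_mixed_NE u p -> @cylinder R n k (zero_set F) (fmap p).
Proof.
move=> H; rewrite /cylinder /fmap /= row_mxKl.
by have [_ ?] := (hC (NE_range H)).1 (NE_dev H).
Qed.

Lemma gmap_range z : zero_set F (lsubmx z) -> forall t, 0 < coords (gmap z) t < 1.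
Proof.
move=> hz t; rewrite /coords /gmap mxE; case: (kind t) => [i|l]; last exact: hi_range.
exact: hS hz i.
Qed.

Lemma Xof_gmap z : Xof (gmap z) = lsubmx z.
Proof. by apply/rowP => i; rewrite /Xof /coords !mxE hr mxE. Qed.

Lemma gmap_in z : @cylinder R n k (zero_set F) z -> totally_mixed_NE u (gmap z).
Proof.
move=> hz; have hrg := gmap_range hz.
have := (hC hrg).2; rewrite Xof_gmap => H.
have {}H := H (conj _ hz).
move=> t; split; first exact: hrg.
apply: H => t' i e; by rewrite /coords /gmap !mxE e hr.
Qed.

Lemma gf p : totally_mixed_NE u p -> gmap (fmap p) = p.
Proof.
move=> H; have [hc _] := (hC (NE_range H)).1 (NE_dev H).
apply/rowP => t; rewrite /gmap /fmap mxE row_mxKl row_mxKr.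
case e: (kind t) => [i|l]; rewrite !mxE.
  by rewrite -(hc t i e).
rewrite (hfr' e) hi_hh //; exact: NE_range H _.
Qed.

Lemma fg z : @cylinder R n k (zero_set F) z -> fmap (gmap z) = z.
Proof.
move=> hz; rewrite -[RHS]hsubmxK /fmap Xof_gmap; congr row_mx.
by apply/rowP => l; rewrite /coords !mxE hfr hh_hi ?mxE.
Qed.

Lemma fmap_cont : {within totally_mixed_NE u, continuous fmap}.
Proof.
apply: continuous_in_subspaceT => p; rewrite inE => Hp.
apply: row_continuous_at => j; case: (split_ordP j) => j' ->.
  have -> : (fun y : 'rV[R]_N => fmap y ord0 (lshift k j')) = (fun y => y ord0 (r j')).
    by apply: funext => y; rewrite /fmap row_mxEl mxE.
  exact: coord_continuous.
have -> : (fun y : 'rV[R]_N => fmap y ord0 (rshift n j')) = (@hh R \o (fun y => y ord0 (fr j'))).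
  by apply: funext => y; rewrite /fmap row_mxEr mxE.
apply: continuous_comp; first exact: coord_continuous.
exact: hh_cont (NE_range Hp (fr j')).
Qed.

Lemma gmap_cont : {within @cylinder R n k (zero_set F), continuous gmap}.
Proof.
apply: continuous_subspaceT => z.
apply: row_continuous_at => t.
have -> : (fun y : 'rV[R]_(n + k) => gmap y ord0 t) = (fun y => match kind t with
   | inl i => y ord0 (lshift k i) | inr l => hi (y ord0 (rshift n l)) end).
  by apply: funext => y; rewrite /gmap mxE; case: (kind t) => [i|l]; rewrite mxE.
case: (kind t) => [i|l]; first exact: coord_continuous.
apply: (continuous_comp (f := fun y : 'rV[R]_(n + k) => y ord0 (rshift n l)) (g := @hi R)).
  exact: coord_continuous.
exact: hi_cont.
Qed.

Lemma dev_poly a (q : 'rV[R]_a -> 'rV[R]_N) i b :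
  (forall t, is_poly (fun y => coords (q y) t)) -> is_poly (fun y => dev_payoff u i b (q y)).
Proof.
move=> hq; rewrite /dev_payoff; apply: is_poly_sum => s.
apply: is_polyM; first exact: is_polyC.
apply: is_poly_prod => t; case: (s t); first exact: hq.
by apply: is_polyB; [exact: is_polyC | exact: hq].
Qed.

Lemma graph_sa : semialgebraic (graph_on (totally_mixed_NE u) fmap).
Proof.
pose x (w : 'rV[R]_(N + (n + k))) t := w ord0 (lshift (n + k) t).
have hx t : is_poly (fun w => x w t) by exact: is_polyX.
have hl t : is_poly (fun w : 'rV[R]_(N + (n + k)) => coords (lsubmx w) t).
  by apply: (is_poly_ext _ (hx t)) => w; rewrite /coords mxE.
pose S1 := [set w : 'rV[R]_(N + (n + k)) | forall t, 0 < x w t].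
pose S2 := [set w : 'rV[R]_(N + (n + k)) | forall t, 0 < 1 - x w t].
pose S3 := [set w : 'rV[R]_(N + (n + k)) | forall t, dev_payoff u t true (@lsubmx R 1 N (n + k) w) - dev_payoff u t false (@lsubmx R 1 N (n + k) w) = 0].
pose S4 := [set w : 'rV[R]_(N + (n + k)) | forall i, w ord0 (rshift N (lshift k i)) - x w (r i) = 0].
pose S5 := [set w : 'rV[R]_(N + (n + k)) | forall l, w ord0 (rshift N (rshift n l)) * (x w (fr l) * (1 - x w (fr l)))
                               - (2 * x w (fr l) - 1) = 0].
have s1 : semialgebraic S1 by apply: sa_forall => t; apply: sa_gt0.
have s2 : semialgebraic S2.
  by apply: sa_forall => t; apply: sa_gt0; apply: is_polyB; [exact: is_polyC|].
have s3 : semialgebraic S3.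
  by apply: sa_forall => t; apply: sa_eq0; apply: is_polyB; apply: dev_poly.
have s4 : semialgebraic S4.
  by apply: sa_forall => i; apply: sa_eq0; apply: is_polyB; [exact: is_polyX|].
have s5 : semialgebraic S5.
  apply: sa_forall => l; apply: sa_eq0; apply: is_polyB.
    apply: is_polyM; first exact: is_polyX.
    by apply: is_polyM => //; apply: is_polyB => //; exact: is_polyC.
  by apply: is_polyB; [apply: is_polyM => //; exact: is_polyC | exact: is_polyC].
apply: (sa_ext _ (sa_I (sa_I (sa_I (sa_I s1 s2) s3) s4) s5)) => w.
have cl t : coords (lsubmx w) t = x w t by rewrite /coords mxE.
split.
  move=> [[[[H1 H2] H3] H4] H5]; split.
    move=> t; split; first by rewrite cl; apply/andP; split; [exact: H1| have := H2 t; lra].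
    by apply/eqP; rewrite -subr_eq0; apply/eqP; exact: H3.
  apply/rowP => j; case: (split_ordP j) => j' ->; rewrite /fmap.
    rewrite row_mxEl mxE cl mxE; have := H4 j'; lra.
  rewrite row_mxEr mxE mxE; apply/hh_char.
    by rewrite cl; apply/andP; split; [exact: H1| have := H2 (fr j'); lra].
  by rewrite cl; have := H5 j'; lra.
move=> [H1 H2]; have R1 t : 0 < x w t < 1 by rewrite -cl; case: (H1 t).
split; first split; first split; first split.
- by move=> t; case/andP: (R1 t).
- by move=> t; case/andP: (R1 t) => _; lra.
- by move=> t; case: (H1 t) => _ ->; rewrite subrr.
- move=> i; have := congr1 (fun M : 'rV[R]_(n + k) => M ord0 (lshift k i)) H2.
  by rewrite /fmap row_mxEl !mxE cl => ->; rewrite subrr.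
- move=> l; have := congr1 (fun M : 'rV[R]_(n + k) => M ord0 (rshift n l)) H2.
  rewrite /fmap row_mxEr !mxE cl => /hh_char -> //; by rewrite subrr.
Qed.

Lemma ML_iso : sa_isomorphic (totally_mixed_NE u) (@cylinder R n k (zero_set F)).
Proof.
exists fmap, gmap; split; first exact: fmap_in.
split; first exact: gmap_in.
split; first exact: gf.
split; first exact: fg.
split; first exact: fmap_cont.
split; first exact: gmap_cont.
exact: graph_sa.
Qed.

End ML.

Lemma zero_set_sa (R : realType) n m (F : 'I_m -> mpoly.mpoly n R) : semialgebraic (zero_set F).
Proof.
apply: (sa_ext _ (sa_forall (fun j => sa_zero (F j)))) => x; by [].
Qed.

Lemma ML_stable (R : realType) (n m N k : nat) (F : 'I_m -> mpoly.mpoly n R) (u : game2 R N)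
  (kind : 'I_N -> 'I_n + 'I_k) (r : 'I_n -> 'I_N) (fr : 'I_k -> 'I_N) :
  (forall i, kind (r i) = inl i) ->
  (forall l, kind (fr l) = inr l) ->
  (forall t l, kind t = inr l -> t = fr l) ->
  (forall x, zero_set F x -> forall i, 0 < coords x i < 1) ->
  (forall p : 'rV[R]_N, (forall t, 0 < coords p t < 1) ->
    ((forall t, dev_payoff u t true p = dev_payoff u t false p) <->
     ((forall t i, kind t = inl i -> coords p t = coords p (r i)) /\ zero_set F (Xof r p)))) ->
  stably_isomorphic (totally_mixed_NE u) (zero_set F).
Proof.
move=> h1 h2 h3 h4 h5.
apply: si_trans (si_proj k (zero_set_sa F)).
apply: si_iso; exact: (ML_iso h1 h2 h3 h4 h5).
Qed.

Section Blocks.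
Variables (n : nat) (dg : 'I_n -> nat).

Definition cum (i : nat) : nat := (\sum_(j < n | (j < i)%N) dg j)%N.
Definition DD : nat := (\sum_(j < n) dg j)%N.
Definition inblk (i : 'I_n) (q : nat) : bool := (cum i <= q)%N && (q < cum i + dg i)%N.

Lemma cumS (i : 'I_n) : cum i.+1 = (cum i + dg i)%N.
Proof.
rewrite /cum (bigD1 i) //= ?ltnSn // addnC; congr (_ + _)%N.
apply: eq_bigl => j; rewrite ltnS leq_eqVlt -val_eqE /=.
by case: ltngtP.
Qed.

Lemma cum_mono (a b : nat) : (a <= b)%N -> (cum a <= cum b)%N.
Proof.
move=> ab; rewrite /cum [X in (_ <= X)%N](bigID (fun j : 'I_n => (j < a)%N)) /=.
rewrite -[X in (X <= _)%N]addn0 leq_add //; apply: eq_leq; apply: eq_bigl => j.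
case: (ltnP j a) => h /=; last by rewrite andbF. by rewrite andbT (leq_trans h ab).
Qed.

Lemma cum_n : cum n = DD.
Proof. by apply: eq_bigl => j; rewrite ltn_ord. Qed.

Lemma blk_le (i : 'I_n) : (cum i + dg i <= DD)%N.
Proof. by rewrite -cumS -cum_n; apply: cum_mono. Qed.

Lemma blk_sep (i i' : 'I_n) : (i < i')%N -> (cum i + dg i <= cum i')%N.
Proof. by move=> h; rewrite -cumS; apply: cum_mono. Qed.

Lemma inblk_uniq (i i' : 'I_n) q : inblk i q -> inblk i' q -> i = i'.
Proof.
rewrite /inblk => /andP [a1 a2] /andP [b1 b2].
case: (ltngtP i i') => [h|h|/val_inj //].
  by have := blk_sep h; lia.
by have := blk_sep h; lia.
Qed.

Lemma disc_ivt (f : nat -> nat) q k : (f 0 <= q)%N -> (q < f k)%N ->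
  exists2 i, (i < k)%N & (f i <= q < f i.+1)%N.
Proof.
elim: k => [|k ih] h0 hk; first by lia.
case: (ltnP q (f k)) => h.
  by have [i ik hi] := ih h0 h; exists i => //; lia.
by exists k => //; apply/andP.
Qed.

Lemma inblk_ex q : (q < DD)%N -> exists i, inblk i q.
Proof.
move=> hq; have h0 : (cum 0 <= q)%N by rewrite /cum big_pred0 //.
rewrite -cum_n in hq; have [i ik /andP [h1 h2]] := disc_ivt h0 hq.
exists (Ordinal ik); rewrite /inblk; have := cumS (Ordinal ik); rewrite /= => e; rewrite e in h2; exact/andP.
Qed.

Lemma n_pos (tp : 'I_DD) : (0 < n)%N.
Proof.
case: (posnP n) => // n0; have h := ltn_ord tp.
have e : DD = 0%N by rewrite /DD big1 // => j _; have := ltn_ord j; lia.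
lia.
Qed.

Definition blk (tp : 'I_DD) : 'I_n := odflt (Ordinal (n_pos tp)) [pick i | inblk i tp].

Lemma blkP tp : inblk (blk tp) tp.
Proof.
rewrite /blk; case: pickP => [i //|h]; have [i hi] := inblk_ex (ltn_ord tp).
by have := h i; rewrite hi.
Qed.

Lemma blk_eq (tp : 'I_DD) i : inblk i tp -> blk tp = i.
Proof. move=> h; exact: inblk_uniq (blkP tp) h. Qed.

End Blocks.

Section PF.
Variable R : realType.

Lemma IC (N a e : nat) (c : R) : (a + e <= N)%N ->
  \prod_(t < N) (if (a <= t)%N && (t < a + e)%N then c else 1) = c ^+ e.
Proof.
move=> hN.
rewrite -(big_mkord xpredT (fun t : nat => if (a <= t)%N && (t < a + e)%N then c else 1)).
rewrite (big_cat_nat (n := a)) //; last lia.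
rewrite (big_cat_nat (m := a) (n := a + e)) //; last exact: leq_addr.
have P1 : \prod_(0 <= t < a) (if (a <= t)%N && (t < a + e)%N then c else 1) = 1.
  rewrite big_nat big1 // => t /andP [_ h].
  by have -> : ((a <= t)%N && (t < a + e)%N) = false by apply/negbTE/negP => /andP []; lia.
have P3 : \prod_(a + e <= t < N) (if (a <= t)%N && (t < a + e)%N then c else 1) = 1.
  rewrite big_nat big1 // => t /andP [h _].
  by have -> : ((a <= t)%N && (t < a + e)%N) = false by apply/negbTE/negP => /andP []; lia.
have P2 : \prod_(a <= t < a + e) (if (a <= t)%N && (t < a + e)%N then c else 1) = c ^+ e.
  rewrite (eq_big_nat _ _ (F2 := fun=> c)) ?prodr_const_nat ?addKn // => t h.
  by rewrite h.
by rewrite P1 P2 P3 /= mul1r mulr1.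
Qed.

Variables (n : nat) (dg : 'I_n -> nat).

Lemma PF N (x : 'I_n -> R) (e : 'I_n -> nat) (f : 'I_N -> R) :
  (forall i, e i <= dg i)%N -> (DD dg <= N)%N ->
  (forall (t : 'I_N) i, inblk dg i t -> f t = x i) ->
  \prod_(t < N | t \in finset (fun t : 'I_N => [exists i : 'I_n, (cum dg i <= t)%N && (t < cum dg i + e i)%N])) f t
  = \prod_(i < n) x i ^+ e i.
Proof.
move=> he hD hf; rewrite big_mkcond /=.
transitivity (\prod_(t < N) \prod_(i < n) (if (cum dg i <= t)%N && (t < cum dg i + e i)%N then x i else 1)).
  apply: eq_bigr => t _; rewrite finset.in_set; case: existsP => [[i0 /andP [h1 h2]] | hn].
    rewrite (bigD1 i0) /= ?h1 ?h2 //= big1 ?mulr1.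
      by apply: hf; rewrite /inblk h1 /=; apply: (leq_trans h2); rewrite leq_add2l.
    move=> i hi; case: ifP => // /andP [g1 g2].
    have e0 : i = i0.
      apply: (@inblk_uniq _ dg _ _ t); rewrite /inblk ?g1 ?h1 /=.
        by apply: (leq_trans g2); rewrite leq_add2l.
      by apply: (leq_trans h2); rewrite leq_add2l.
    by rewrite e0 eqxx in hi.
  rewrite big1 // => i _; case: ifP => // h; exfalso; apply: hn; by exists i.
rewrite exchange_big; apply: eq_bigr => i _; apply: IC.
apply: (leq_trans _ hD); apply: (leq_trans _ (blk_le dg i)); by rewrite leq_add2l.
Qed.

End PF.

Section SchemeA.
Variables (R : realType) (n m : nat) (F : 'I_m -> mpoly.mpoly n R).
Definition dg (i : 'I_n) : nat := (\max_(j < m) deg_in (F j) i)%N.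
Local Notation D := (DD dg).
Local Notation N := (D + m)%N.
Local Notation cm := (cum dg).

Lemma deg_bound j (mm : 'X_{1..n}) i : mm \in msupp (F j) -> (mm i <= dg i)%N.
Proof.
move=> h; rewrite /dg; apply: (leq_trans _ (leq_bigmax (F := fun j0 => deg_in (F j0) i) j)).
rewrite /deg_in; exact: (leq_bigmax_seq (F := fun mm0 : 'X_{1..n} => mm0 i) mm h).
Qed.

Definition Qset (mm : 'X_{1..n}) : {set 'I_N} :=
  finset (fun t : 'I_N => [exists i : 'I_n, (cm i <= t)%N && (t < cm i + mm i)%N]).

Definition own_s (tp : nat) : nat := ((tp + D - 2) %% D)%N.
Definition sameblk (s s' : nat) : bool := [exists i : 'I_n, inblk dg i s && inblk dg i s'].
Definition guard (tp : nat) : bool :=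
  [&& (own_s tp).+1 < D, sameblk (own_s tp) (own_s tp).+1, tp != own_s tp & tp != (own_s tp).+1]%N.

Definition PA (t : 'I_N) (tp : 'I_D) : seq (R * {set 'I_N}) :=
  if guard tp then [:: (1, [set insubd t (own_s tp)]%SET); (-1, [set insubd t (own_s tp).+1]%SET)]
  else [::].

Definition LL (Pp : 'I_N -> 'I_D -> seq (R * {set 'I_N})) (t : 'I_N) : seq (R * {set 'I_N}) :=
  match fintype.split t with
  | inl tp => Pp t tp
  | inr j => [seq ((F j)@_mm, Qset mm) | mm <- msupp (F j)]
  end.

Definition Pwf (Pp : 'I_N -> 'I_D -> seq (R * {set 'I_N})) :=
  forall tp l, l \in Pp (lshift m tp) tp -> lshift m tp \notin l.2.

Lemma mono1 (a : 'I_N) (p : 'rV[R]_N) : mono [set a]%SET p = coords p a.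
Proof.
rewrite /mono (eq_bigl (fun k => k == a)) ?big_pred1_eq // => k; by rewrite finset.in_set1.
Qed.

Lemma val_insubdN (t : 'I_N) q : (q < N)%N -> val (insubd t q) = q.
Proof. by move=> h; rewrite val_insubd h. Qed.

Lemma ord_insubdN (t : 'I_N) q : (q < N)%N -> nat_of_ord (insubd t q) = q.
Proof. exact: val_insubdN. Qed.

Lemma LL_wf Pp t l : Pwf Pp -> l \in LL Pp t -> t \notin l.2.
Proof.
move=> hP; rewrite /LL; case: (split_ordP t) => [tp ->|j ->]; first exact: hP.
move=> /mapP [mm hmm ->] /=; rewrite finset.in_set; apply/negP => /existsP [i /andP [_ h]].
have := deg_bound i hmm; have := blk_le dg i; move: h; rewrite /=; lia.
Qed.

Lemma PA_wf : Pwf PA.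
Proof.
move=> tp l; rewrite /PA; case g: (guard tp) => //; move: g => /and4P [g1 g2 g3 g4].
rewrite !inE => /orP [/eqP ->|/eqP ->] /=; rewrite finset.in_set1 -val_eqE /= val_insubdN //; try lia.
Qed.

Definition GG Pp (t : 'I_N) (p : 'rV[R]_N) : R := \sum_(l <- LL Pp t) l.1 * mono l.2 p.

Lemma dev_GG Pp t p : Pwf Pp ->
  (dev_payoff (mgame (LL Pp)) t true p = dev_payoff (mgame (LL Pp)) t false p <-> GG Pp t p = 0).
Proof. move=> hP; by rewrite dev_mgame_false dev_mgame_true // => l; exact: LL_wf. Qed.

Lemma GG_P0 Pp (tp : 'I_D) p : GG Pp (lshift m tp) p = \sum_(l <- Pp (lshift m tp) tp) l.1 * mono l.2 p.
Proof.
rewrite /GG /LL; case: (split_ordP (lshift m tp)) => [tp' e|j' e].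
  by have -> : tp' = tp by apply/val_inj; move/(congr1 val): e => /= ->.
by move/(congr1 val): e => /=; have := ltn_ord tp; lia.
Qed.

Lemma GG_P (tp : 'I_D) p : GG PA (lshift m tp) p =
  if guard tp then coords p (insubd (lshift m tp) (own_s tp)) - coords p (insubd (lshift m tp) (own_s tp).+1) else 0.
Proof.
rewrite GG_P0 /PA; case: (guard tp); last by rewrite big_nil.
by rewrite !big_cons big_nil !mono1 addr0 mul1r mulN1r.
Qed.

Lemma GG_Q Pp (j : 'I_m) p : GG Pp (rshift D j) p = \sum_(mm <- msupp (F j)) (F j)@_mm * mono (Qset mm) p.
Proof.
rewrite /GG /LL; case: (split_ordP (rshift D j)) => [tp' e|j' e].
  by move/(congr1 val): e => /=; have := ltn_ord tp'; lia.
have -> : j' = j by apply/val_inj; move/(congr1 val): e => /=; lia.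
by rewrite big_map.
Qed.

Hypothesis hd : forall i, (0 < dg i)%N.

Lemma cum_lt (i : 'I_n) : (cm i < D)%N.
Proof. have := blk_le dg i; have := hd i; lia. Qed.

Definition rA (i : 'I_n) : 'I_N := lshift m (Ordinal (cum_lt i)).
Definition kindA (t : 'I_N) : 'I_n + 'I_m :=
  match fintype.split t with inl tp => inl (blk tp) | inr j => inr j end.
Definition frA (j : 'I_m) : 'I_N := rshift D j.

Lemma kindA_r i : kindA (rA i) = inl i.
Proof.
rewrite /kindA /rA; case: split_ordP => [tp e|j e].
  congr inl; apply: blk_eq; move/(congr1 val): e => /= <-.
  rewrite /inblk leqnn /=; have := hd i; lia.
by move/(congr1 val): e => /=; have := cum_lt i; lia.
Qed.

Lemma kindA_fr j : kindA (frA j) = inr j.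
Proof.
rewrite /kindA /frA; case: split_ordP => [tp e|j' e].
  by move/(congr1 val): e => /=; have := ltn_ord tp; lia.
by congr inr; apply/val_inj; move/(congr1 val): e => /=; lia.
Qed.

Lemma kindA_fr' t j : kindA t = inr j -> t = frA j.
Proof.
rewrite /kindA /frA; case: split_ordP => [tp e //|j' e [<-]]; exact: e.
Qed.

Definition BC (p : 'rV[R]_N) := forall (t : 'I_N) i, inblk dg i t -> coords p t = coords p (rA i).

Lemma kindA_BC p : (forall t i, kindA t = inl i -> coords p t = coords p (rA i)) <-> BC p.
Proof.
split => H.
  move=> t i hi; apply: H; rewrite /kindA; case: split_ordP => [tp e|j e].
    by congr inl; apply: blk_eq; move: hi; rewrite e.
  move: hi; rewrite e /inblk /= => /andP [_ h].
  by have := blk_le dg i; lia.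
move=> t i; rewrite /kindA; case: split_ordP => [tp e [<-]|j e //].
by apply: H; rewrite e /=; exact: blkP.
Qed.

Lemma GG_Q_eval Pp p j : BC p -> GG Pp (rshift D j) p = meval (coords (Xof rA p)) (F j).
Proof.
move=> hB; rewrite GG_Q mevalE big_seq [RHS]big_seq; apply: eq_bigr => mm hmm; congr (_ * _).
rewrite /mono (PF (x := fun i => coords p (rA i))) //.
- by apply: eq_bigr => i _; rewrite /coords mxE.
- by move=> i; exact: deg_bound hmm.
- exact: leq_addr.
Qed.

Hypothesis h3 : (3 <= D)%N \/ (forall i, dg i <= 1)%N.

Lemma own_s_ok s : (3 <= D)%N -> (s.+1 < D)%N ->
  let tp := ((s + 2) %% D)%N in [/\ (tp < D)%N, own_s tp = s, tp != s & tp != s.+1].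
Proof.
move=> h3' hs /=; rewrite /own_s.
case: (ltnP (s + 2) D) => h.
  rewrite (modn_small h); split => //; try lia.
  have -> : (s + 2 + D - 2 = s + D)%N by lia.
  by rewrite modnDr modn_small //; lia.
have e : (s + 2 = D)%N by lia.
rewrite e modnn; split => //; try lia.
by rewrite modn_small; lia.
Qed.

Lemma chain p : (forall t, GG PA t p = 0) -> BC p.
Proof.
move=> H.
have step : forall (i : 'I_n) k, (k < dg i)%N -> coords p (insubd (rA i) (cm i + k)%N) = coords p (rA i).
  move=> i; elim=> [|k ih] hk.
    by congr (coords p _); apply/val_inj; rewrite val_insubdN /=; have := cum_lt i; lia.
  have hD : (3 <= D)%N.
    case: h3 => // h; by have := h i; lia.
  set s := (cm i + k)%N.
  have hs : (s.+1 < D)%N by have := blk_le dg i; rewrite /s; lia.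
  have [htp ho hn1 hn2] := own_s_ok hD hs.
  set tp := Ordinal htp.
  have g : guard tp.
    apply/and4P; split => //=; rewrite ho //.
    by apply/existsP; exists i; rewrite /inblk /s; apply/andP; split; apply/andP; split; lia.
  have := H (lshift m tp); rewrite GG_P g /= ho => /eqP; rewrite subr_eq0 => /eqP e.
  rewrite -ih; last lia.
  have -> : insubd (rA i) (cm i + k.+1)%N = insubd (lshift m tp) s.+1.
    apply/val_inj; rewrite !val_insubdN //; rewrite /s; lia.
  have -> : insubd (rA i) (cm i + k)%N = insubd (lshift m tp) s.
    apply/val_inj; rewrite !val_insubdN //; rewrite /s; lia.
  by rewrite e.
move=> t i /andP [h1 h2].
rewrite -(step i (t - cm i)%N); last lia.
congr (coords p _); apply: ord_inj; have ht := ltn_ord t; rewrite ord_insubdN; lia.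
Qed.

Lemma hC_A p : (forall t, 0 < coords p t < 1) ->
  ((forall t, dev_payoff (mgame (LL PA)) t true p = dev_payoff (mgame (LL PA)) t false p) <->
   ((forall t i, kindA t = inl i -> coords p t = coords p (rA i)) /\ zero_set F (Xof rA p))).
Proof.
move=> _; rewrite kindA_BC; split.
  move=> H; have H' : forall t, GG PA t p = 0 by move=> t; apply/(dev_GG _ _ PA_wf).
  have hB := chain H'; split => // j.
  by rewrite /peval -(GG_Q_eval PA).
move=> [hB hz] t; apply/(dev_GG _ _ PA_wf); case: (split_ordP t) => [tp ->|j ->].
  rewrite GG_P; case g: (guard tp) => //; move: g => /and4P [g1 /existsP [i /andP [b1 b2]] _ _].
  rewrite (hB _ i) ?(hB _ i) ?subrr //; rewrite val_insubdN //; lia.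
by rewrite GG_Q_eval //; exact: hz.
Qed.

End SchemeA.

Section SchemeB.
Variables (R : realType) (n m' : nat) (F : 'I_m'.+1 -> mpoly.mpoly n R).
Local Notation m := m'.+1.
Local Notation D := (DD (dg F)).
Local Notation N := (D + m)%N.
Hypothesis hd : forall i, (0 < dg F i)%N.
Hypothesis hD2 : D = 2%N.
Variable i0 : 'I_n.
Hypothesis hi0 : (2 <= dg F i0)%N.

Lemma all_i0 i : i = i0.
Proof.
case: (eqVneq i i0) => // ne; exfalso.
have : (dg F i0 + dg F i <= D)%N.
  rewrite /DD (bigD1 i0) //= leq_add2l (bigD1 i) //=; exact: leq_addr.
have := hd i; lia.
Qed.

Lemma cum_i0 (i : 'I_n) : cum (dg F) i = 0%N.
Proof.
rewrite /cum big1 // => j hj; exfalso; move: hj; rewrite (all_i0 j) (all_i0 i); lia.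
Qed.

Lemma dg_i0 i : dg F i = 2%N.
Proof.
have := blk_le (dg F) i; rewrite cum_i0 hD2 (all_i0 i); lia.
Qed.

Definition pos (q : nat) : 'I_N := insubd (rA hd i0) q.

Lemma insubd_pos (t : 'I_N) q : (q < N)%N -> insubd t q = pos q.
Proof. move=> h; apply: val_inj; by rewrite !val_insubdN. Qed.

Lemma pos_val (t : 'I_N) : pos t = t.
Proof. apply: val_inj; by rewrite val_insubdN. Qed.

Definition PB (t : 'I_N) (tp : 'I_D) : seq (R * {set 'I_N}) :=
  if (tp == 0 :> nat) then [:: (1, [set insubd t 1]%SET); (-1, [set insubd t D]%SET)]
  else [:: (1, [set insubd t 0]%SET); (-1, [set insubd t D]%SET)].

Lemma PB_wf : Pwf PB.
Proof.
move=> tp l; have htp : (tp < 2)%N by have := ltn_ord tp; lia.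
rewrite /PB; case: ifP => h0;
rewrite !inE => /orP [/eqP ->|/eqP ->] /=; rewrite finset.in_set1 -val_eqE /= val_insubdN //=; move: h0 => /eqP; lia.
Qed.

Lemma GG_PB (tp : 'I_D) p : GG PB (lshift m tp) p =
  if (tp == 0 :> nat) then coords p (pos 1) - coords p (pos D) else coords p (pos 0) - coords p (pos D).
Proof.
rewrite GG_P0 /PB; case: ifP => _; rewrite !big_cons big_nil !mono1 addr0 mul1r mulN1r !insubd_pos //; lia.
Qed.

Definition kindB (t : 'I_N) : 'I_n + 'I_m' :=
  match fintype.split t with
  | inl _ => inl i0
  | inr j => match unlift ord0 j with None => inl i0 | Some j' => inr j' end
  end.
Definition frB (j : 'I_m') : 'I_N := rshift D (lift ord0 j).

Lemma kindB_r i : kindB (rA hd i) = inl i.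
Proof.
rewrite /kindB (all_i0 i); case: split_ordP => [tp e //|j e].
by move/(congr1 val): e; rewrite /rA /= cum_i0; lia.
Qed.

Lemma kindB_fr j : kindB (frB j) = inr j.
Proof.
rewrite /kindB /frB; case: split_ordP => [tp e|j' e].
  by move/(congr1 val): e => /=; have := ltn_ord tp; lia.
have -> : j' = lift ord0 j by apply/val_inj; move/(congr1 val): e => /=; lia.
by rewrite liftK.
Qed.

Lemma kindB_fr' t j : kindB t = inr j -> t = frB j.
Proof.
rewrite /kindB /frB; case: split_ordP => [tp e //|j' e].
case: unliftP => [j'' ej [<-]|//]; by rewrite e ej.
Qed.

Lemma rA_pos : rA hd i0 = pos 0.
Proof. apply: val_inj; rewrite val_insubdN /rA /= ?cum_i0 //; lia. Qed.

Lemma inblk_B i (t : 'I_N) : inblk (dg F) i t -> t = pos 0 \/ t = pos 1.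
Proof.
rewrite /inblk cum_i0 dg_i0 /= => h.
case: (ltnP t 1) => h1; [left | right]; rewrite -(pos_val t); congr pos; lia.
Qed.

Lemma kindB_inl t i : kindB t = inl i -> [\/ t = pos 0, t = pos 1 | t = pos D].
Proof.
rewrite /kindB; case: split_ordP => [tp e _|j e].
  have htp : (tp < 2)%N by have := ltn_ord tp; lia.
  case: (ltnP tp 1) => h1; [apply: Or31 | apply: Or32]; rewrite -(pos_val t) e; congr pos; rewrite /=; lia.
case: unliftP => [j' _ //|ej _]; apply: Or33; rewrite -(pos_val t) e ej; congr pos; by rewrite /= addn0.
Qed.

Lemma kindB_pos q : (q <= D)%N -> kindB (pos q) = inl i0.
Proof.
move=> hq; rewrite /kindB; case: split_ordP => [//|j e].
case: unliftP => [j' ej|//]; move/(congr1 val): e; rewrite val_insubdN; last lia.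
rewrite ej /= /bump /=; lia.
Qed.

Lemma hC_B p : (forall t, 0 < coords p t < 1) ->
  ((forall t, dev_payoff (mgame (LL PB)) t true p = dev_payoff (mgame (LL PB)) t false p) <->
   ((forall t i, kindB t = inl i -> coords p t = coords p (rA hd i)) /\ zero_set F (Xof (rA hd) p))).
Proof.
move=> _.
have o0 : (0 < D)%N by rewrite hD2.
have o1 : (1 < D)%N by rewrite hD2.
split.
  move=> H; have H' : forall t, GG PB t p = 0 by move=> t; apply/(dev_GG _ _ PB_wf).
  have e0 := H' (lshift m (Ordinal o0)); rewrite GG_PB /= in e0.
  have e1 := H' (lshift m (Ordinal o1)); rewrite GG_PB /= in e1.
  have c1 : coords p (pos 1) = coords p (pos 0) by lra.
  have cD : coords p (pos D) = coords p (pos 0) by lra.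
  have hB : BC hd p.
    move=> t i /inblk_B [] ->; by rewrite (all_i0 i) rA_pos.
  split.
    move=> t i /kindB_inl [] ->; by rewrite (all_i0 i) rA_pos.
  by move=> j; rewrite /peval -(@GG_Q_eval _ _ _ _ hd PB).
move=> [hk hz] t; apply/(dev_GG _ _ PB_wf).
have k1 : kindB (pos 1) = inl i0 by apply: kindB_pos; lia.
have kD : kindB (pos D) = inl i0 by apply: kindB_pos.
have c1 : coords p (pos 1) = coords p (pos 0) by rewrite (hk _ i0 k1) rA_pos.
have cD : coords p (pos D) = coords p (pos 0) by rewrite (hk _ i0 kD) rA_pos.
case: (split_ordP t) => [tp ->|j ->].
  rewrite GG_PB; case: ifP => _; rewrite ?c1 cD subrr //.
rewrite (@GG_Q_eval _ _ _ _ hd PB); first exact: hz j.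
move=> t' i /inblk_B [] ->; rewrite (all_i0 i) rA_pos //.
Qed.

End SchemeB.

Section Final.
Variables (R : realType) (n : nat).

Lemma empty_iso a b (A : set 'rV[R]_a) (B : set 'rV[R]_b) :
  (forall x, ~ A x) -> (forall y, ~ B y) -> sa_isomorphic A B.
Proof.
move=> hA hB.
have eA : A = set0 by apply/seteqP; split => x // /hA.
have eB : B = set0 by apply/seteqP; split => x // /hB.
exists (fun _ => 0), (fun _ => 0); rewrite eA eB.
do 4 (split; first by move=> ?).
split; first exact: continuous_subspace0.
split; first exact: continuous_subspace0.
apply: (sa_ext _ (sa_set0 R _)) => z; by split => // [[]].
Qed.

Lemma empty_case m (F : 'I_m -> mpoly.mpoly n R) : ~ (exists x, zero_set F x) ->
  exists u : game2 R (DD (dg F) + m), stably_isomorphic (totally_mixed_NE u) (zero_set F).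
Proof.
move=> hne.
have m0 : (0 < m)%N.
  case: (posnP m) => // e; exfalso; apply: hne; exists 0 => j; have := ltn_ord j; lia.
pose L := fun _ : 'I_(DD (dg F) + m) => [:: ((1 : R), (finset.set0 : {set 'I_(DD (dg F) + m)}))].
exists (mgame L); apply: si_iso; apply: empty_iso; last by move=> y hy; apply: hne; exists y.
move=> p hp; have [_] := hp (rshift (DD (dg F)) (Ordinal m0)).
rewrite dev_mgame_false dev_mgame_true; last by move=> l; rewrite inE => /eqP -> /=; rewrite finset.in_set0.
rewrite big_cons big_nil addr0 mul1r /mono big_pred0 => [|k]; last by rewrite finset.in_set0.
by move/eqP; rewrite oner_eq0.
Qed.

Lemma hS_of m (F : 'I_m -> mpoly.mpoly n R) :
  (forall x : 'rV[R]_n, zero_set F x ->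
     (forall i : 'I_n, 0 < coords x i) /\ \sum_(i < n) coords x i < 1) ->
  forall x, zero_set F x -> forall i, 0 < coords x i < 1.
Proof.
move=> hyp x hx i; have [hp hs] := hyp x hx.
apply/andP; split => //; apply: le_lt_trans hs.
rewrite (bigD1 i) //= lerDl; apply: sumr_ge0 => k _; exact: ltW.
Qed.

Lemma hd_of m (F : 'I_m -> mpoly.mpoly n R) (x0 : 'rV[R]_n) :
  (forall x, zero_set F x -> forall i, 0 < coords x i < 1) -> zero_set F x0 ->
  forall i, (0 < dg F i)%N.
Proof.
move=> hS hx0 i; rewrite lt0n; apply/negP => /eqP d0.
pose x1 : 'rV[R]_n := \row_k (if k == i then 1 else x0 ord0 k).
have hx1 : zero_set F x1.
  move=> j; rewrite -(hx0 j) /peval !mevalE; apply: eq_big_seq => mm hmm; congr (_ * _).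
  apply: eq_bigr => k _; rewrite /coords mxE; case: eqP => [->|//].
  have := deg_bound i hmm; rewrite d0 leqn0 => /eqP ->; by rewrite !expr0.
have := hS x1 hx1 i; by rewrite /coords mxE eqxx ltxx andbF.
Qed.

Lemma special_case m (F : 'I_m -> mpoly.mpoly n R) (x0 : 'rV[R]_n) (i0 : 'I_n) :
  (forall x, zero_set F x -> forall i, 0 < coords x i < 1) -> zero_set F x0 ->
  (2 <= dg F i0)%N -> DD (dg F) = 2%N ->
  exists u : game2 R (DD (dg F) + m), stably_isomorphic (totally_mixed_NE u) (zero_set F).
Proof.
move=> hS hx0 hi0 hD2; have hd := hd_of hS hx0.
move: F hS hx0 hi0 hD2 hd; case: m => [|m'] F hS hx0 hi0 hD2 hd.
  exfalso; have h0 : zero_set F 0 by move=> [j hj]; exfalso; by rewrite ltn0 in hj.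
  by have := hS 0 h0 i0; rewrite /coords mxE ltxx.
exists (mgame (LL (PB (F:=F)))).
exact: (ML_stable (kindB_r hd hD2 hi0) (kindB_fr hD2 hi0) (@kindB_fr' _ _ _ F i0) hS
          (fun p => hC_B hd hD2 hi0 (p:=p))).
Qed.

End Final.

Unset Implicit Arguments.
Set Strict Implicit.

Theorem theorem6 (R : realType) (n m : nat) (F : 'I_m -> mpoly.mpoly n R) :
  (forall x : 'rV[R]_n, zero_set F x ->
     (forall i : 'I_n, 0 < coords x i) /\ \sum_(i < n) coords x i < 1) ->
  let D' := (\sum_(i < n) \max_(j < m) deg_in (F j) i)%N in
  exists u : game2 R (D' + m),
    stably_isomorphic (totally_mixed_NE u) (zero_set F).
Proof.
move=> hyp D'.
have hS := hS_of hyp.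
change (exists u : game2 R (DD (dg F) + m), stably_isomorphic (totally_mixed_NE u) (zero_set F)).
case: (pselect (exists x, zero_set F x)) => [[x0 hx0]|hne]; last exact: empty_case.
have hd := hd_of hS hx0.
case: (pselect ((3 <= DD (dg F))%N \/ (forall i, dg F i <= 1)%N)) => [h3|nh3].
  exists (mgame (LL (PA (F:=F)))).
  exact: (ML_stable (kindA_r hd) (@kindA_fr _ _ _ F) (@kindA_fr' _ _ _ F) hS
            (fun p => hC_A hd h3 (p:=p))).
have [i0 hi0] : exists i0, (2 <= dg F i0)%N.
  apply: contrapT => hn; apply: nh3; right => i; rewrite leqNgt; apply/negP => h; apply: hn; by exists i.
have hD2 : DD (dg F) = 2%N.
  have h1 : (dg F i0 <= DD (dg F))%N by rewrite /DD (bigD1 i0) //= leq_addr.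
  have : ~ (3 <= DD (dg F))%N by move=> h; apply: nh3; left.
  lia.
exact: special_case hS hx0 hi0 hD2.
Qed.
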